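(* Let $L$ be a finite-dimensional Lie superalgebra, let $0\to R\to F\xrightarrow{\pi}L\to 0$ be a free presentation of $L$, and let $D=(R\cap F')/[F,R]$. Then: (1) $\dim D\le\dim\mathrm{Ker}(\lambda)$ whenever $(T,\lambda)\in C(L)$ is a universal element; (2) for every $(K,\psi)\in C(L)$, $\mathrm{Ker}(\psi)$ is a homomorphic image of $D$.
   Context: Lie superalgebras over a field of characteristic $\neq 2,3$; homomorphisms are even. A free presentation of $L$ is a free Lie superalgebra $F$ on a $\mathbb{Z}_2$-graded set with a surjective homomorphism $\pi:F\to L$, $R=\mathrm{Ker}(\pi)$; $F'=[F,F]$. $C(L)$ is the class of pairs $(K,\lambda)$ with $\lambda:K\to L$ a surjective homomorphism and $\mathrm{Ker}(\lambda)\subseteq[K,K]\cap Z(K)$, where $Z(K)$ is the center. $(T,\sigma)\in C(L)$ is universal if for every $(K,\lambda)\in C(L)$ there is a homomorphism $\tau:T\to K$ with $\lambda\circ\tau=\sigma$. *)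

(* Defs.v *)
(* Lie superalgebras over a field k, carriers are k-modules
   (possibly infinite-dimensional), Z/2-grading given by two subspaces. *)
From HB Require Import structures.
From mathcomp Require Import all_boot all_algebra.
Set Implicit Arguments. Unset Strict Implicit. Unset Printing Implicit Defensive.
Import GRing.Theory.
Local Open Scope ring_scope.

Definition ssign (k : fieldType) (b : bool) : k := if b then -1 else 1.

(* A Lie superalgebra over k: V = V_false (+) V_true (even (+) odd),
   bilinear graded bracket, super skew-symmetry, super Jacobi identity. *)
Record lieSuperAlg (k : fieldType) := LieSuperAlg {
  lsa_car :> lmodType k;
  lsa_part : bool -> lsa_car -> Prop;
  lsa_br : lsa_car -> lsa_car -> lsa_car;
  lsa_part0 : forall b, lsa_part b 0;
  lsa_partL : forall b (a : k) x y, lsa_part b x -> lsa_part b y -> lsa_part b (a *: x + y);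
  lsa_decomp : forall v, exists v0 v1, lsa_part false v0 /\ lsa_part true v1 /\ v = v0 + v1;
  lsa_disj : forall v, lsa_part false v -> lsa_part true v -> v = 0;
  lsa_brL : forall (a : k) x y z, lsa_br (a *: x + y) z = a *: lsa_br x z + lsa_br y z;
  lsa_brR : forall (a : k) x y z, lsa_br z (a *: x + y) = a *: lsa_br z x + lsa_br z y;
  lsa_brP : forall i j x y, lsa_part i x -> lsa_part j y -> lsa_part (addb i j) (lsa_br x y);
  lsa_skew : forall i j x y, lsa_part i x -> lsa_part j y ->
     lsa_br x y = - (ssign k (i && j) *: lsa_br y x);
  lsa_jacobi : forall i j l x y z, lsa_part i x -> lsa_part j y -> lsa_part l z ->
     ssign k (i && l) *: lsa_br x (lsa_br y z) + ssign k (j && i) *: lsa_br y (lsa_br z x)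
     + ssign k (l && j) *: lsa_br z (lsa_br x y) = 0
}.

Section Defs.
Variable k : fieldType.

Definition is_hom (L M : lieSuperAlg k) (f : L -> M) : Prop :=
  (forall (a : k) x y, f (a *: x + y) = a *: f x + f y) /\
  (forall b x, @lsa_part _ L b x -> @lsa_part _ M b (f x)) /\
  (forall x y, f (@lsa_br _ L x y) = @lsa_br _ M (f x) (f y)).

Definition span (V : lmodType k) (P : V -> Prop) (v : V) : Prop :=
  exists s : seq (k * V), (forall p, p \in s -> P p.2) /\ v = \sum_(p <- s) p.1 *: p.2.

Definition brsp (L : lieSuperAlg k) (A B : L -> Prop) : L -> Prop :=
  span (fun z => exists a b, A a /\ B b /\ z = @lsa_br _ L a b).

Definition derived (L : lieSuperAlg k) : L -> Prop :=
  brsp (fun _ => True) (fun _ => True).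

Definition center (L : lieSuperAlg k) (z : L) : Prop :=
  forall x, @lsa_br _ L z x = 0.

Definition finite_dim (L : lieSuperAlg k) : Prop :=
  exists n (v : 'I_n -> L), forall x, exists c : 'I_n -> k, x = \sum_i c i *: v i.

Definition is_free_on (X : Type) (par : X -> bool) (F : lieSuperAlg k) (iota : X -> F) : Prop :=
  (forall x, @lsa_part _ F (par x) (iota x)) /\
  forall (M : lieSuperAlg k) (g : X -> M), (forall x, @lsa_part _ M (par x) (g x)) ->
    exists phi : F -> M, is_hom phi /\ (forall x, phi (iota x) = g x) /\
      forall psi : F -> M, is_hom psi -> (forall x, psi (iota x) = g x) -> psi =1 phi.

Definition inC (L Kk : lieSuperAlg k) (lam : Kk -> L) : Prop :=
  is_hom lam /\ (forall y, exists x, lam x = y) /\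
  (forall x, lam x = 0 -> @derived Kk x /\ @center Kk x).

Definition universal (L T : lieSuperAlg k) (sigma : T -> L) : Prop :=
  inC sigma /\
  forall (Kk : lieSuperAlg k) (lam : Kk -> L), inC lam ->
    exists tau : T -> Kk, is_hom tau /\ forall t, lam (tau t) = sigma t.

(* dim (U / W) >= n, for subspaces W <= U of V *)
Definition qdim_ge (V : lmodType k) (U W : V -> Prop) (n : nat) : Prop :=
  exists v : 'I_n -> V, (forall i, U (v i)) /\
    forall c : 'I_n -> k, W (\sum_i c i *: v i) -> forall i, c i = 0.

(* dim (U1 / W1) <= dim (U2 / W2) (all infinite dimensions identified) *)
Definition qdim_le (V1 V2 : lmodType k) (U1 W1 : V1 -> Prop) (U2 W2 : V2 -> Prop) : Prop :=
  forall n, qdim_ge U1 W1 n -> qdim_ge U2 W2 n.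

(* S (a subspace of M) is a homomorphic image of the Lie superalgebra U/W
   (U, W graded subspaces of L, W <= U, U closed under brackets modulo W):
   there is a map f defined on U, linear, even, bracket preserving, vanishing
   on W (so it factors through U/W) and with image exactly S. *)
Definition quot_hom_image (L M : lieSuperAlg k) (U W : L -> Prop) (S : M -> Prop) : Prop :=
  exists f : L -> M,
    (forall x, U x -> S (f x)) /\
    (forall (a : k) x y, U x -> U y -> f (a *: x + y) = a *: f x + f y) /\
    (forall b x, U x -> @lsa_part _ L b x -> @lsa_part _ M b (f x)) /\
    (forall x y, U x -> U y -> f (@lsa_br _ L x y) = @lsa_br _ M (f x) (f y)) /\
    (forall x, W x -> f x = 0) /\
    (forall z, S z -> exists x, U x /\ f x = z).

End Defs.

(* Main.v *)
From Pilot Require Import Defs.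
From HB Require Import structures.
From mathcomp Require Import all_boot all_algebra.
From Stdlib Require Import ClassicalEpsilon Classical FunctionalExtensionality PropExtensionality.
Set Implicit Arguments. Unset Strict Implicit. Unset Printing Implicit Defensive.
Import GRing.Theory.
Local Open Scope ring_scope.
Notation span := Pilot.Defs.span.


Section Span.
Variables (k : fieldType) (V : lmodType k).
Implicit Types (P Q : V -> Prop).

Lemma span_ind P (Q : V -> Prop) : Q 0 ->
  (forall a x y, P x -> Q y -> Q (a *: x + y)) -> forall v, span P v -> Q v.
Proof.
move=> Q0 QS v [s [Ps ->]]; elim: s Ps => [|[a x] s IH] Ps; first by rewrite big_nil.
rewrite big_cons /=; apply: QS; first by apply: (Ps (a, x)); rewrite inE eqxx.
by apply: IH => p ps; apply: Ps; rewrite inE ps orbT.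
Qed.

Lemma span0 P : span P 0.
Proof. by exists [::]; rewrite big_nil. Qed.

Lemma span_gen P x : P x -> span P x.
Proof. by move=> Px; exists [:: (1, x)]; rewrite big_seq1 scale1r; split=> // p; rewrite inE => /eqP ->. Qed.

Lemma span_lc P a x y : span P x -> span P y -> span P (a *: x + y).
Proof.
move=> [s [Ps ->]] [t [Pt ->]].
exists ([seq (a * p.1, p.2) | p <- s] ++ t); split.
  move=> p; rewrite mem_cat => /orP [].
    by move=> /mapP [q qs ->]; exact: (Ps q qs).
  exact: Pt.
rewrite big_cat big_map /= scaler_sumr; congr (_ + _); apply: eq_bigr => p _.
by rewrite scalerA.
Qed.

Lemma span_add P x y : span P x -> span P y -> span P (x + y).
Proof. by move=> sx sy; rewrite -[x]scale1r; apply: span_lc. Qed.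

Lemma span_scale P a x : span P x -> span P (a *: x).
Proof. by move=> sx; rewrite -[_ *: _]addr0; apply: span_lc => //; apply: span0. Qed.

Lemma span_opp P x : span P x -> span P (- x).
Proof. by move=> sx; rewrite -scaleN1r; apply: span_scale. Qed.

Lemma span_sub P x y : span P x -> span P y -> span P (x - y).
Proof. by move=> sx sy; apply: span_add => //; apply: span_opp. Qed.

Lemma span_mono P Q v : (forall x, P x -> span Q x) -> span P v -> span Q v.
Proof.
move=> PQ; apply: span_ind; first exact: span0.
by move=> a x y Px sy; apply: span_lc => //; apply: PQ.
Qed.

Lemma span_sum P (I : finType) (J : pred I) (c : I -> k) (u : I -> V) :
  (forall i, J i -> span P (u i)) -> span P (\sum_(i | J i) c i *: u i).
Proof.
move=> Hu; apply: (big_ind (span P)); first exact: span0.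
  by move=> ? ?; apply: span_add.
by move=> i Ji; apply: span_scale; apply: Hu.
Qed.

End Span.

Definition linf (k : fieldType) (U V : lmodType k) (f : U -> V) :=
  forall (a : k) x y, f (a *: x + y) = a *: f x + f y.

Section Lin.
Variables (k : fieldType) (U V : lmodType k) (f : U -> V) (hf : linf f).

Lemma lin0 : f 0 = 0.
Proof.
have h := hf 1 0 0; rewrite !scale1r addr0 in h.
by apply: (@addrI _ (f 0)); rewrite addr0 -h.
Qed.
Lemma linD x y : f (x + y) = f x + f y.
Proof. by have := hf 1 x y; rewrite !scale1r. Qed.
Lemma linZ a x : f (a *: x) = a *: f x.
Proof. by rewrite -[a *: x]addr0 hf lin0 addr0. Qed.
Lemma linN x : f (- x) = - f x.
Proof. by rewrite -scaleN1r linZ scaleN1r. Qed.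
Lemma linB x y : f (x - y) = f x - f y.
Proof. by rewrite linD linN. Qed.
Lemma lin_sum (I : finType) (J : pred I) (c : I -> k) (u : I -> U) :
  f (\sum_(i | J i) c i *: u i) = \sum_(i | J i) c i *: f (u i).
Proof.
apply: (big_rec2 (fun x y => f x = y)); first exact: lin0.
by move=> i x y _ <-; rewrite hf.
Qed.

Lemma span_lin P v : span P v -> span (fun z => exists x, P x /\ z = f x) (f v).
Proof.
move: v; apply: span_ind; first by rewrite lin0; apply: span0.
by move=> a x y Px sy; rewrite hf; apply: span_lc => //; apply: span_gen; exists x.
Qed.
End Lin.

Section Lie.
Variables (k : fieldType) (F : lieSuperAlg k).
Local Notation br := (@lsa_br k F).
Local Notation part := (@lsa_part k F).

Lemma br0l x : br 0 x = 0.
Proof.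
have h := lsa_brL 1 (0 : F) 0 x; rewrite !scale1r addr0 in h.
by apply: (@addrI _ (br 0 x)); rewrite addr0 -h.
Qed.
Lemma br0r x : br x 0 = 0.
Proof.
have h := lsa_brR 1 (0 : F) 0 x; rewrite !scale1r addr0 in h.
by apply: (@addrI _ (br x 0)); rewrite addr0 -h.
Qed.
Lemma brDl x y z : br (x + y) z = br x z + br y z.
Proof. by have := lsa_brL 1 x y z; rewrite !scale1r. Qed.
Lemma brDr x y z : br z (x + y) = br z x + br z y.
Proof. by have := lsa_brR 1 x y z; rewrite !scale1r. Qed.
Lemma brZl a x z : br (a *: x) z = a *: br x z.
Proof. by rewrite -[a *: x]addr0 lsa_brL br0l addr0. Qed.
Lemma brZr a x z : br z (a *: x) = a *: br z x.
Proof. by rewrite -[a *: x]addr0 lsa_brR br0r addr0. Qed.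
Lemma brNl x z : br (- x) z = - br x z.
Proof. by rewrite -scaleN1r brZl scaleN1r. Qed.
Lemma brNr x z : br z (- x) = - br z x.
Proof. by rewrite -scaleN1r brZr scaleN1r. Qed.
Lemma brBl x y z : br (x - y) z = br x z - br y z.
Proof. by rewrite brDl brNl. Qed.
Lemma brBr x y z : br z (x - y) = br z x - br z y.
Proof. by rewrite brDr brNr. Qed.

Lemma partD b x y : part b x -> part b y -> part b (x + y).
Proof. by move=> px py; have := lsa_partL 1 px py; rewrite scale1r. Qed.
Lemma partZ b a x : part b x -> part b (a *: x).
Proof. by move=> px; rewrite -[_ *: _]addr0; apply: lsa_partL => //; apply: lsa_part0. Qed.
Lemma partN b x : part b x -> part b (- x).
Proof. by move=> px; rewrite -scaleN1r; apply: partZ. Qed.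
Lemma partB b x y : part b x -> part b y -> part b (x - y).
Proof. by move=> px py; apply: partD => //; apply: partN. Qed.
Lemma part_sum b (I : finType) (J : pred I) (u : I -> F) :
  (forall i, J i -> part b (u i)) -> part b (\sum_(i | J i) u i).
Proof.
move=> H; apply: (big_ind (part b)); first exact: lsa_part0.
  by move=> ? ?; apply: partD.
exact: H.
Qed.

Lemma decomp_uniq a0 a1 b0 b1 : part false a0 -> part true a1 -> part false b0 -> part true b1 ->
  a0 + a1 = b0 + b1 -> a0 = b0 /\ a1 = b1.
Proof.
move=> pa0 pa1 pb0 pb1 e.
have e2 : a0 - b0 = b1 - a1.
  have -> : a0 = b0 + b1 - a1 by rewrite -e addrK.
  by rewrite addrC addrA addKr.
have z : a0 - b0 = 0 by apply: lsa_disj; [apply: partB | rewrite e2; apply: partB].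
split; first by apply/eqP; rewrite -subr_eq0 z.
by apply/eqP; rewrite eq_sym -subr_eq0 -e2 z.
Qed.

Definition graded (A : F -> Prop) := forall x, A x -> exists x0 x1,
  A x0 /\ A x1 /\ part false x0 /\ part true x1 /\ x = x0 + x1.

Lemma span_graded P : (forall z, P z -> exists z0 z1, span P z0 /\ span P z1 /\
   part false z0 /\ part true z1 /\ z = z0 + z1) -> graded (span P).
Proof.
move=> HP; apply: span_ind.
  by exists 0, 0; do ![split; first (try apply: span0; try apply: lsa_part0)]; rewrite addr0.
move=> a x y Px [y0 [y1 [s0 [s1 [p0 [p1 ->]]]]]].
have [x0 [x1 [t0 [t1 [q0 [q1 ->]]]]]] := HP x Px.
exists (a *: x0 + y0), (a *: x1 + y1).
do ![split; first (try apply: span_lc; try apply: lsa_partL)] => //.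
by rewrite scalerDr -!addrA; congr (_ + _); rewrite addrC -addrA; congr (_ + _); rewrite addrC.
Qed.

Lemma brsp_graded A B : graded A -> graded B -> graded (brsp A B).
Proof.
move=> gA gB; apply: span_graded => z [a [b [Aa [Bb ->]]]].
have [a0 [a1 [A0 [A1 [pa0 [pa1 ea]]]]]] := gA a Aa.
have [b0 [b1 [B0 [B1 [pb0 [pb1 eb]]]]]] := gB b Bb.
have g x y : A x -> B y -> span (fun z => exists a b, A a /\ B b /\ z = br a b) (br x y).
  by move=> ? ?; apply: span_gen; exists x, y.
exists (br a0 b0 + br a1 b1), (br a0 b1 + br a1 b0).
split; first by apply: span_add; apply: g.
split; first by apply: span_add; apply: g.
split; first by apply: partD; [exact: (lsa_brP pa0 pb0) | exact: (lsa_brP pa1 pb1)].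
split; first by apply: partD; [exact: (lsa_brP pa0 pb1) | exact: (lsa_brP pa1 pb0)].
rewrite ea eb !brDl !brDr.
by rewrite [br a1 b0 + _]addrC addrACA.
Qed.

Lemma graded_true : graded (fun _ => True).
Proof. by move=> x _; have [x0 [x1 [? [? ->]]]] := lsa_decomp x; exists x0, x1. Qed.

Lemma derived_graded : graded (@derived k F).
Proof. exact: brsp_graded graded_true graded_true. Qed.

Lemma graded_swap_br A B a b : graded A -> graded B -> A a -> B b -> brsp B A (br a b).
Proof.
move=> gA gB Aa Bb.
have [a0 [a1 [A0 [A1 [pa0 [pa1 ->]]]]]] := gA a Aa.
have [b0 [b1 [B0 [B1 [pb0 [pb1 ->]]]]]] := gB b Bb.
have g i j x y : A x -> B y -> part i x -> part j y -> brsp B A (br x y).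
  move=> Ax By px py; rewrite (lsa_skew px py); apply: span_opp; apply: span_scale.
  by apply: span_gen; exists y, x.
rewrite !brDl !brDr; do !apply: span_add; apply: g; eassumption.
Qed.

Lemma brsp_swap A B v : graded A -> graded B -> brsp A B v -> brsp B A v.
Proof.
move=> gA gB; apply: span_mono => z [a [b [Aa [Bb ->]]]]; exact: graded_swap_br.
Qed.

Lemma center_right (N : F -> Prop) : graded N -> (forall n x, N n -> br n x = 0) ->
  forall n x, N n -> br x n = 0.
Proof.
move=> gN HN n x Nn.
have [n0 [n1 [N0 [N1 [pn0 [pn1 ->]]]]]] := gN n Nn.
have [x0 [x1 [px0 [px1 ->]]]] := lsa_decomp x.
have g i j y z : N z -> part i y -> part j z -> br y z = 0.
  by move=> Nz py pz; rewrite (lsa_skew py pz) HN // scaler0 oppr0.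
by rewrite !brDl !brDr !(g _ _ _ _ N0 px0 pn0, g _ _ _ _ N1 px0 pn1, g _ _ _ _ N0 px1 pn0, g _ _ _ _ N1 px1 pn1) !addr0.
Qed.

End Lie.

Lemma hom_lin (k : fieldType) (L M : lieSuperAlg k) (f : L -> M) : is_hom f -> linf f.
Proof. by case. Qed.

Lemma kernel_graded (k : fieldType) (L M : lieSuperAlg k) (f : L -> M) : is_hom f ->
  graded (fun x => f x = 0).
Proof.
move=> [hl [hp hb]] x fx.
have [x0 [x1 [p0 [p1 ex]]]] := lsa_decomp x.
have e : f x0 + f x1 = 0 + 0 by rewrite addr0 -(linD hl) -ex.
have [] := decomp_uniq (hp _ _ p0) (hp _ _ p1) (lsa_part0 _ _) (lsa_part0 _ _) e.
by move=> ? ?; exists x0, x1.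
Qed.


Lemma hom_comp (k : fieldType) (L M N : lieSuperAlg k) (f : L -> M) (g : M -> N) :
  is_hom f -> is_hom g -> is_hom (fun x => g (f x)).
Proof.
move=> [fl [fp fb]] [gl [gp gb]]; split; first by move=> a x y; rewrite fl gl.
by split=> [b x px|x y]; [apply: gp; apply: fp | rewrite fb gb].
Qed.

Lemma homog_lift (k : fieldType) (L M : lieSuperAlg k) (f : L -> M) b z :
  is_hom f -> (exists y, f y = z) -> lsa_part b z -> exists y, lsa_part b y /\ f y = z.
Proof.
move=> hf [y <-] pz.
have [hl [hp _]] := hf.
have [y0 [y1 [p0 [p1 ey]]]] := lsa_decomp y.
have e : f y = f y0 + f y1 by rewrite ey (linD hl).
case: b pz => pz.
  have e' : 0 + f y = f y0 + f y1 by rewrite add0r.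
  have [_ e2] := decomp_uniq (lsa_part0 _ _) pz (hp _ _ p0) (hp _ _ p1) e'.
  by exists y1; rewrite e2.
have e' : f y + 0 = f y0 + f y1 by rewrite addr0.
have [e2 _] := decomp_uniq pz (lsa_part0 _ _) (hp _ _ p0) (hp _ _ p1) e'.
by exists y0; rewrite e2.
Qed.

Lemma ker_central (k : fieldType) (L K : lieSuperAlg k) (psi : K -> L) :
  inC psi -> forall n x, psi n = 0 -> lsa_br n x = 0 /\ lsa_br x n = 0.
Proof.
move=> [hp [_ hk]] n x pn; split; first by have [_ ->] := hk n pn.
apply: (center_right (kernel_graded hp)) => // m y pm.
by have [_ ->] := hk m pm.
Qed.

Section Part2.
Variables (k : fieldType) (L : lieSuperAlg k) (X : Type) (par : X -> bool) (F : lieSuperAlg k)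
  (iota : X -> F) (hfree : is_free_on par iota) (pi : F -> L) (hpi : is_hom pi)
  (hsurj : forall y, exists x, pi x = y).

Lemma lift_hom (K : lieSuperAlg k) (psi : K -> L) : inC psi ->
  exists beta : F -> K, is_hom beta /\ forall x, psi (beta x) = pi x.
Proof.
move=> hC; have [hps [psurj _]] := hC.
have H x : exists y, lsa_part (par x) y /\ psi y = pi (iota x).
  apply: homog_lift => //; have [_ [hp _]] := hpi; apply: hp; exact: hfree.1.
have [g hg] := choice _ H.
have [beta [hb [hbg _]]] := hfree.2 K g (fun x => (hg x).1).
exists beta; split => //.
have hpar : forall x, lsa_part (par x) (pi (iota x)).
  by move=> x; have [_ [hp _]] := hpi; apply: hp; exact: hfree.1.
have [phi [_ [_ uniq]]] := hfree.2 L (fun x => pi (iota x)) hpar.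
move=> x; rewrite (uniq _ (hom_comp hb hps)); last by move=> y; rewrite hbg (hg y).2.
by rewrite (uniq _ hpi).
Qed.

Lemma part2 (K : lieSuperAlg k) (psi : K -> L) : inC psi ->
  quot_hom_image (fun x : F => pi x = 0 /\ derived x) (brsp (fun _ : F => True) (fun x => pi x = 0))
     (fun z : K => psi z = 0).
Proof.
move=> hC; have [beta [hb hbp]] := lift_hom hC.
have [bl [bp bb]] := hb.
have [hps [psurj hker]] := hC.
exists beta; split; first by move=> x [px _]; rewrite hbp.
split; first by move=> a x y _ _; apply: bl.
split; first by move=> b x _; apply: bp.
split; first by move=> x y _ _; apply: bb.
split.
  apply: span_ind; first exact: (lin0 bl).
  move=> a x y [u [r [_ [pr ->]]]] by0; rewrite bl bb by0.
  have pr' : psi (beta r) = 0 by rewrite hbp.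
  by rewrite (ker_central hC (beta u) pr').2 scaler0 addr0.
move=> z pz; have [dz _] := hker z pz.
suff [w [dw bw]] : exists w, derived w /\ beta w = z.
  by exists w; split => //; split => //; rewrite -hbp bw.
move: z dz {pz}; apply: span_ind; first by exists 0; split; [apply: span0 | apply: (lin0 bl)].
move=> a x y [u [v [_ [_ ->]]]] [w [dw <-]].
have [fu pfu] := hsurj (psi u); have [fv pfv] := hsurj (psi v).
have [n1 [eu nu]] : exists n, u = beta fu + n /\ psi n = 0.
  exists (u - beta fu); split; first by rewrite addrC subrK.
  by rewrite (linB (hom_lin hps)) hbp pfu subrr.
have [n2 [ev nv]] : exists n, v = beta fv + n /\ psi n = 0.
  exists (v - beta fv); split; first by rewrite addrC subrK.
  by rewrite (linB (hom_lin hps)) hbp pfv subrr.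
exists (a *: lsa_br fu fv + w); split.
  by apply: span_lc => //; apply: span_gen; exists fu, fv.
rewrite bl bb eu ev !brDl !brDr.
rewrite (ker_central hC (beta fu) nv).2 (ker_central hC (beta fv) nu).1 (ker_central hC n2 nu).1.
by rewrite !addr0.
Qed.
End Part2.


Definition pb (P : Prop) : bool := if excluded_middle_informative P then true else false.
Lemma pbP P : pb P -> P.
Proof. by rewrite /pb; case: excluded_middle_informative. Qed.
Lemma pbT P : P -> pb P.
Proof. by rewrite /pb; case: excluded_middle_informative. Qed.

Section SQdef.
Variables (k : fieldType) (F : lieSuperAlg k) (V W : F -> Prop).
Local Notation br := (@lsa_br k F).
Local Notation part := (@lsa_part k F).

Record SQhyp : Prop := { hV0 : V 0; hVL : forall a x y, V x -> V y -> V (a *: x + y);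
  hW0 : W 0; hWL : forall a x y, W x -> W y -> W (a *: x + y);
  hWV : forall x, W x -> V x; hVg : graded V; hWg : graded W;
  hVbr : forall x y, V x -> V y -> V (br x y);
  hWbrl : forall x y, V x -> W y -> W (br x y);
  hWbrr : forall x y, W x -> V y -> W (br x y) }.

Definition cn (x : F) : F := epsilon (inhabits 0) (fun y => W (x - y)).

Record Qt (H : SQhyp) := QT { qval : F; qvalP : pb (V qval /\ cn qval = qval) }.

Variable H : SQhyp.
Implicit Types (q r : Qt H).

Lemma VD x y : V x -> V y -> V (x + y).
Proof. by move=> h1 h2; have := hVL H 1 h1 h2; rewrite scale1r. Qed.
Lemma VZ a x : V x -> V (a *: x).
Proof. by move=> h1; have := hVL H a h1 (hV0 H); rewrite addr0. Qed.
Lemma VN x : V x -> V (- x).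
Proof. by move=> ?; rewrite -scaleN1r; apply: VZ. Qed.
Lemma VB x y : V x -> V y -> V (x - y).
Proof. by move=> ? ?; apply: VD => //; apply: VN. Qed.
Lemma WD x y : W x -> W y -> W (x + y).
Proof. by move=> h1 h2; have := hWL H 1 h1 h2; rewrite scale1r. Qed.
Lemma WZ a x : W x -> W (a *: x).
Proof. by move=> h1; have := hWL H a h1 (hW0 H); rewrite addr0. Qed.
Lemma WN x : W x -> W (- x).
Proof. by move=> ?; rewrite -scaleN1r; apply: WZ. Qed.
Lemma WB x y : W x -> W y -> W (x - y).
Proof. by move=> ? ?; apply: WD => //; apply: WN. Qed.

Lemma cn_spec x : W (x - cn x).
Proof. by apply: (epsilon_spec (inhabits 0) (fun y => W (x - y))); exists x; rewrite subrr; apply: hW0 H. Qed.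
Lemma cn_spec' x : W (cn x - x).
Proof. by rewrite -opprB; apply: WN; apply: cn_spec. Qed.
Lemma cn_eq x y : W (x - y) -> cn x = cn y.
Proof.
move=> wxy; rewrite /cn; congr epsilon; apply: functional_extensionality => z.
apply: propositional_extensionality; split => h.
  have -> : y - z = (x - z) - (x - y) by rewrite opprB [RHS]addrC addrA subrK.
  exact: WB.
have -> : x - z = (x - y) + (y - z) by rewrite [RHS]addrA subrK.
exact: WD.
Qed.
Lemma cnV x : V x -> V (cn x).
Proof. move=> vx; rewrite -[cn x](subKr x); apply: (VB vx); apply: (hWV H); exact: cn_spec. Qed.
Lemma cnK x : cn (cn x) = cn x.
Proof. exact: cn_eq (cn_spec' x). Qed.

Definition q0 : Qt H := QT H (pbT (conj (cnV (hV0 H)) (cnK 0))).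
Definition mk (x : F) : Qt H :=
  match excluded_middle_informative (V x) with
  | left Vx => QT H (pbT (conj (cnV Vx) (cnK x)))
  | right _ => q0 end.

Lemma qval_inj : injective (@qval H).
Proof.
case=> x px [y py] /= exy; move: px py; rewrite exy => px py.
by rewrite (bool_irrelevance px py).
Qed.
Lemma qvalV q : V (qval q).
Proof. by have [] := pbP (qvalP q). Qed.
Lemma qval_cn q : cn (qval q) = qval q.
Proof. by have [] := pbP (qvalP q). Qed.
Lemma qval_mk x : V x -> qval (mk x) = cn x.
Proof. by rewrite /mk; case: excluded_middle_informative. Qed.
Lemma mk_val q : mk (qval q) = q.
Proof. by apply: qval_inj; rewrite qval_mk ?qval_cn //; apply: qvalV. Qed.
Lemma mk_eqW x y : V x -> V y -> W (x - y) -> mk x = mk y.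
Proof. by move=> vx vy w; apply: qval_inj; rewrite !qval_mk // (cn_eq w). Qed.
Lemma mk_inv x y : V x -> V y -> mk x = mk y -> W (x - y).
Proof.
move=> vx vy /(congr1 (@qval H)); rewrite !qval_mk // => e.
have -> : x - y = (x - cn x) - (y - cn y) by rewrite e opprB addrA subrK.
by apply: WB; apply: cn_spec.
Qed.
Lemma Qind (P : Qt H -> Prop) : (forall x, V x -> P (mk x)) -> forall q, P q.
Proof. by move=> h q; rewrite -(mk_val q); apply: h; apply: qvalV. Qed.

Ltac vt := repeat (first [assumption | apply: VD | apply: VZ | apply: VN | apply: qvalV | apply: (hV0 H)]).

Definition zeroQ := mk 0.
Definition oppQ q := mk (- qval q).
Definition addQ q r := mk (qval q + qval r).
Definition scaleQ a q := mk (a *: qval q).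

Lemma mkD x y : V x -> V y -> addQ (mk x) (mk y) = mk (x + y).
Proof.
move=> vx vy; rewrite /addQ; apply: mk_eqW; rewrite ?qval_mk //; try apply: VD => //; try apply: cnV => //.
by rewrite opprD addrACA; apply: WD; apply: cn_spec'.
Qed.
Lemma mkZ a x : V x -> scaleQ a (mk x) = mk (a *: x).
Proof.
move=> vx; rewrite /scaleQ; apply: mk_eqW; rewrite ?qval_mk //; try apply: VZ => //; try apply: cnV => //.
by rewrite -scalerBr; apply: WZ; apply: cn_spec'.
Qed.
Lemma mkN x : V x -> oppQ (mk x) = mk (- x).
Proof.
move=> vx; rewrite /oppQ; apply: mk_eqW; rewrite ?qval_mk //; try apply: VN => //; try apply: cnV => //.
by rewrite opprK addrC; apply: cn_spec.
Qed.

Lemma addQA : associative addQ.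
Proof.
elim/Qind => x vx; elim/Qind => y vy; elim/Qind => z vz.
by rewrite !mkD ?addrA //; apply: VD.
Qed.
Lemma addQC : commutative addQ.
Proof. by elim/Qind => x vx; elim/Qind => y vy; rewrite !mkD // addrC. Qed.
Lemma add0Q : left_id zeroQ addQ.
Proof. by elim/Qind => x vx; rewrite /zeroQ mkD ?add0r //; apply: hV0 H. Qed.
Lemma addNQ : left_inverse zeroQ oppQ addQ.
Proof. by elim/Qind => x vx; rewrite mkN // mkD ?addNr //; apply: VN. Qed.

Lemma scaleQA a b q : scaleQ a (scaleQ b q) = scaleQ (a * b) q.
Proof. by elim/Qind: q => x vx; rewrite !mkZ ?scalerA //; apply: VZ. Qed.
Lemma scale1Q : left_id 1 scaleQ.
Proof. by elim/Qind => x vx; rewrite mkZ // scale1r. Qed.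
Lemma scaleQDr : right_distributive scaleQ addQ.
Proof.
move=> a; elim/Qind => x vx; elim/Qind => y vy.
by rewrite mkD // !mkZ ?mkD ?scalerDr //; vt.
Qed.
Lemma scaleQDl q : {morph scaleQ^~ q: a b / a + b >-> addQ a b}.
Proof. by elim/Qind: q => x vx a b; rewrite !mkZ // mkD ?scalerDl //; apply: VZ. Qed.

End SQdef.

HB.instance Definition _ (k : fieldType) (F : lieSuperAlg k) (V W : F -> Prop) (H : SQhyp V W) :=
  [isSub for @qval k F V W H].
HB.instance Definition _ (k : fieldType) (F : lieSuperAlg k) (V W : F -> Prop) (H : SQhyp V W) :=
  [Choice of @Qt k F V W H by <:].
HB.instance Definition _ (k : fieldType) (F : lieSuperAlg k) (V W : F -> Prop) (H : SQhyp V W) :=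
  GRing.isZmodule.Build (@Qt k F V W H)
  (@addQA k F V W H) (@addQC k F V W H) (@add0Q k F V W H) (@addNQ k F V W H).
HB.instance Definition _ (k : fieldType) (F : lieSuperAlg k) (V W : F -> Prop) (H : SQhyp V W) :=
  GRing.Zmodule_isLmodule.Build k (@Qt k F V W H)
  (@scaleQA k F V W H) (@scale1Q k F V W H) (@scaleQDr k F V W H) (@scaleQDl k F V W H).

Section SQlie.
Variables (k : fieldType) (F : lieSuperAlg k) (V W : F -> Prop) (H : SQhyp V W).
Local Notation br := (@lsa_br k F).
Local Notation part := (@lsa_part k F).
Local Notation Q := (Qt H).
Local Notation mk := (mk H).
Implicit Types q r : Q.

Lemma mkD' x y : V x -> V y -> mk x + mk y = mk (x + y). Proof. exact: mkD. Qed.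
Lemma mkZ' a x : V x -> a *: mk x = mk (a *: x). Proof. exact: mkZ. Qed.
Lemma mkN' x : V x -> - mk x = mk (- x). Proof. exact: mkN. Qed.
Lemma mk0' : (0 : Q) = mk 0. Proof. by []. Qed.

Definition partQ b q := exists y, V y /\ part b y /\ q = mk y.
Definition brQ q r : Q := mk (br (qval q) (qval r)).

Ltac vt := repeat (first [assumption | apply: (VD H) | apply: (VZ H) | apply: (VN H) | apply: (qvalV H)
   | apply: (hV0 H) | apply: (hVbr H)]).

Lemma mkBr x y : V x -> V y -> brQ (mk x) (mk y) = mk (br x y).
Proof.
move=> vx vy; rewrite /brQ !qval_mk //; apply: mk_eqW.
- by apply: (hVbr H); apply: cnV.
- exact: (hVbr H).
have -> : br (cn W x) (cn W y) - br x y = br (cn W x - x) (cn W y) + br x (cn W y - y).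
  by rewrite brBl brBr addrA subrK.
apply: (WD H).
  apply: (hWbrr H); first exact: (cn_spec' H).
  exact: (cnV H).
apply: (hWbrl H) => //; exact: (cn_spec' H).
Qed.

Lemma Qind' (P : Q -> Prop) : (forall x, V x -> P (mk x)) -> forall q, P q.
Proof. exact: Qind. Qed.

Lemma partQ0 b : partQ b 0.
Proof. by exists 0; split; [apply: (hV0 H)| split; [apply: lsa_part0 | ]]. Qed.
Lemma partQL b (a : k) q r : partQ b q -> partQ b r -> partQ b (a *: q + r).
Proof.
move=> [x [vx [px ->]]] [y [vy [py ->]]]; exists (a *: x + y); split; first exact: (hVL H).
by split; [apply: lsa_partL | rewrite mkZ' // mkD' //; vt].
Qed.
Lemma partQdecomp q : exists v0 v1, partQ false v0 /\ partQ true v1 /\ q = v0 + v1.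
Proof.
have [y0 [y1 [v0 [v1 [p0 [p1 e]]]]]] := hVg H (qvalV q).
exists (mk y0), (mk y1); split; first by exists y0.
split; first by exists y1.
by rewrite mkD' // -e mk_val.
Qed.
Lemma partQdisj q : partQ false q -> partQ true q -> q = 0.
Proof.
move=> [y [vy [py ->]]] [y' [vy' [py' e]]].
have w := mk_inv vy vy' e.
have [w0 [w1 [W0 [W1 [pw0 [pw1 ew]]]]]] := hWg H w.
have [e0 _] := decomp_uniq py (partN py') pw0 pw1 ew.
by rewrite mk0'; apply: mk_eqW => //; [apply: (hV0 H) | rewrite subr0 e0].
Qed.
Lemma brQL (a : k) q r s : brQ (a *: q + r) s = a *: brQ q s + brQ r s.
Proof.
elim/Qind': q => x vx; elim/Qind': r => y vy; elim/Qind': s => z vz.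
rewrite mkZ' // mkD' ?mkBr; try by vt.
by rewrite lsa_brL mkZ' ?mkD'; try by vt.
Qed.
Lemma brQR (a : k) q r s : brQ s (a *: q + r) = a *: brQ s q + brQ s r.
Proof.
elim/Qind': q => x vx; elim/Qind': r => y vy; elim/Qind': s => z vz.
rewrite mkZ' // mkD' ?mkBr; try by vt.
by rewrite lsa_brR mkZ' ?mkD'; try by vt.
Qed.
Lemma brQP i j q r : partQ i q -> partQ j r -> partQ (addb i j) (brQ q r).
Proof.
move=> [x [vx [px ->]]] [y [vy [py ->]]]; exists (br x y); split; first exact: (hVbr H).
by split; [apply: lsa_brP | rewrite mkBr].
Qed.
Lemma brQskew i j q r : partQ i q -> partQ j r -> brQ q r = - (ssign k (i && j) *: brQ r q).
Proof.
move=> [x [vx [px ->]]] [y [vy [py ->]]].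
rewrite !mkBr // mkZ' ?mkN' ?(lsa_skew px py) //; vt.
Qed.
Lemma brQjacobi i j l q r s : partQ i q -> partQ j r -> partQ l s ->
     ssign k (i && l) *: brQ q (brQ r s) + ssign k (j && i) *: brQ r (brQ s q)
     + ssign k (l && j) *: brQ s (brQ q r) = 0.
Proof.
move=> [x [vx [px ->]]] [y [vy [py ->]]] [z [vz [pz ->]]].
rewrite !mkBr; try by vt.
rewrite !mkZ'; try by vt.
set a := ssign k (i && l) *: br x (br y z).
set b := ssign k (j && i) *: br y (br z x).
set c := ssign k (l && j) *: br z (br x y).
have va : V a by rewrite /a; vt.
have vb : V b by rewrite /b; vt.
have vc : V c by rewrite /c; vt.
rewrite (mkD' va vb) (mkD' (VD H va vb) vc) /a /b /c (lsa_jacobi px py pz).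
by [].
Qed.

Definition SQ : lieSuperAlg k :=
  @LieSuperAlg k Q partQ brQ partQ0 partQL partQdecomp partQdisj brQL brQR brQP brQskew brQjacobi.

End SQlie.


Section Core.
Variables (k : fieldType) (L F : lieSuperAlg k) (pi : F -> L) (hpi : is_hom pi)
  (hsurj : forall y, exists x, pi x = y).
Variables (I : finType) (u : I -> L) (g : I -> F) (pr : I -> bool)
  (hgu : forall j, pi (g j) = u j) (hgp : forall j, lsa_part (pr j) (g j)).
Local Notation br := (@lsa_br k F).
Local Notation part := (@lsa_part k F).
Definition PJ (J : {set I}) := forall l : L, exists a : I -> k, exists w,
  derived w /\ l = \sum_(j in J) a j *: u j + w.
Variables (J : {set I}) (hJ : PJ J) (hJmin : forall j, j \in J -> ~ PJ (J :\ j)).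

Definition Rk (x : F) := pi x = 0.
Definition Vs (x : F) := exists a : I -> k, exists w, derived w /\ x = \sum_(j in J) a j *: g j + w.
Definition Ws := brsp (fun _ : F => True) Rk.

Let hpl := hom_lin hpi.

Lemma derived_hom (M N : lieSuperAlg k) (f : M -> N) x : is_hom f -> derived x -> derived (f x).
Proof.
move=> [fl [_ fb]]; move: x; apply: span_ind; first by rewrite (lin0 fl); apply: span0.
by move=> a x y [p [q [_ [_ ->]]]] dy; rewrite fl fb; apply: span_lc => //; apply: span_gen; exists (f p), (f q).
Qed.

Lemma derived_lift w : derived w -> exists x, derived x /\ pi x = w.
Proof.
move: w; apply: span_ind; first by exists 0; split; [apply: span0 | apply: (lin0 hpl)].
move=> a x y [p [q [_ [_ ->]]]] [z [dz <-]].
have [p' <-] := hsurj p; have [q' <-] := hsurj q.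
exists (a *: br p' q' + z); split; first by apply: span_lc => //; apply: span_gen; exists p', q'.
by have [_ [_ hb]] := hpi; rewrite hpl hb.
Qed.

Lemma sum0 (M : lmodType k) (v : I -> M) : \sum_(j in J) (0 : k) *: v j = 0.
Proof. by rewrite big1 // => j _; rewrite scale0r. Qed.

Lemma derivedV x : derived x -> Vs x.
Proof. by move=> dx; exists (fun _ => 0), x; rewrite sum0 add0r. Qed.

Lemma Ws_R x : Ws x -> Rk x.
Proof.
move: x; apply: span_ind; first exact: (lin0 hpl).
move=> a x y [p [r [_ [pr0 ->]]]] ry; rewrite /Rk hpl ry.
by have [_ [_ hb]] := hpi; rewrite hb pr0 br0r scaler0 addr0.
Qed.

Lemma Rk_graded : graded Rk.
Proof. exact: kernel_graded hpi. Qed.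

Lemma Ws_graded : graded Ws.
Proof. apply: brsp_graded; [exact: graded_true | exact: Rk_graded]. Qed.

Lemma RF_Ws x y : Rk x -> Ws (br x y).
Proof. by move=> rx; apply: graded_swap_br => //; [exact: Rk_graded | exact: graded_true]. Qed.

Lemma FR_Ws x y : Rk y -> Ws (br x y).
Proof. by move=> ry; apply: span_gen; exists x, y. Qed.

Lemma Vs_graded : graded Vs.
Proof.
move=> x [a [w [dw ->]]].
have [w0 [w1 [d0 [d1 [p0 [p1 ew]]]]]] := derived_graded dw.
exists (\sum_(j in J) (if pr j then 0 else a j) *: g j + w0).
exists (\sum_(j in J) (if pr j then a j else 0) *: g j + w1).
split; first by exists (fun j => if pr j then 0 else a j), w0.
split; first by exists (fun j => if pr j then a j else 0), w1.
split.
  apply: partD => //; apply: part_sum => j _; case E: (pr j); first by rewrite scale0r; apply: lsa_part0.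
  by apply: partZ; rewrite -E.
split.
  apply: partD => //; apply: part_sum => j _; case E: (pr j); last by rewrite scale0r; apply: lsa_part0.
  by apply: partZ; rewrite -E.
rewrite ew addrACA -big_split /=; congr (_ + _); apply: eq_bigr => j _.
by case: (pr j); rewrite scale0r ?add0r ?addr0.
Qed.

Lemma Vs_lc a x y : Vs x -> Vs y -> Vs (a *: x + y).
Proof.
move=> [ax [wx [dx ->]]] [ay [wy [dy ->]]].
exists (fun j => a * ax j + ay j), (a *: wx + wy); split; first exact: span_lc.
have -> : \sum_(j in J) (a * ax j + ay j) *: g j =
   a *: \sum_(j in J) ax j *: g j + \sum_(j in J) ay j *: g j.
  by rewrite scaler_sumr -big_split; apply: eq_bigr => j _; rewrite scalerDl scalerA.
by rewrite scalerDr addrACA.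
Qed.

Lemma SQh : SQhyp Vs Ws.
Proof.
split.
- by exists (fun _ => 0), 0; rewrite sum0 addr0; split => //; apply: span0.
- exact: Vs_lc.
- exact: span0.
- by move=> a x y; apply: span_lc.
- move=> x wx; apply: derivedV; move: wx; apply: span_mono => z [p [q [_ [_ ->]]]].
  by apply: span_gen; exists p, q.
- exact: Vs_graded.
- exact: Ws_graded.
- by move=> x y _ _; apply: derivedV; apply: span_gen; exists x, y.
- by move=> x y _ wy; apply: FR_Ws; apply: Ws_R.
- by move=> x y wx _; apply: RF_Ws; apply: Ws_R.
Qed.


Lemma V_R x : Vs x -> Rk x -> derived x.
Proof.
move=> [a [w [dw ->]]] px.
suff hz : forall j, j \in J -> a j = 0.
  by rewrite big1 ?add0r // => j jJ; rewrite hz // scale0r.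
move=> j0 j0J; apply: NNPP => a0n; apply: (hJmin j0J) => l.
have {}a0n : a j0 != 0 by apply/eqP.
have hp : \sum_(j in J) a j *: u j + pi w = 0.
  by move: px; rewrite /Rk (linD hpl) (lin_sum hpl); under eq_bigr do rewrite hgu.
have [b [w' [dw' el]]] := hJ l.
set c := b j0 / a j0.
exists (fun j => b j - c * a j), (w' - c *: pi w); split.
  by apply: span_sub => //; apply: span_scale; apply: derived_hom.
rewrite (big_setD1 _ j0J) /= in hp; rewrite el (big_setD1 _ j0J) /=.
set Sa := \sum_(i in J :\ j0) a i *: u i in hp *.
set Sb := \sum_(i in J :\ j0) b i *: u i.
have hS : Sa + pi w = - (a j0 *: u j0).
  by rewrite -(addKr (a j0 *: u j0) (Sa + pi w)) [a j0 *: u j0 + _]addrA hp addr0.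
have -> : \sum_(j in J :\ j0) (b j - c * a j) *: u j = Sb - c *: Sa.
  by rewrite scaler_sumr -sumrB; apply: eq_bigr => j _; rewrite scalerBl scalerA.
rewrite addrACA -opprD -scalerDr hS scalerN opprK scalerA mulfVK //.
by rewrite [RHS]addrC addrA.
Qed.

Lemma piV l : exists x, Vs x /\ pi x = l.
Proof.
have [a [w' [dw' ->]]] := hJ l.
have [w [dw <-]] := derived_lift dw'.
exists (\sum_(j in J) a j *: g j + w); split; first by exists a, w.
by rewrite (linD hpl) (lin_sum hpl); under eq_bigr do rewrite hgu.
Qed.

Local Notation K := (SQ SQh).
Local Notation mkK := (mk SQh).
Definition pibar (q : K) : L := pi (qval q).

Lemma KInd (P : K -> Prop) : (forall x, Vs x -> P (mkK x)) -> forall q, P q.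
Proof. exact: Qind. Qed.

Lemma pibar_mk x : Vs x -> pibar (mkK x) = pi x.
Proof.
move=> vx; rewrite /pibar qval_mk //.
have := Ws_R (cn_spec' SQh x); rewrite /Rk (linB hpl) => /eqP; rewrite subr_eq0 => /eqP.
by [].
Qed.

Lemma mkBrK x y : Vs x -> Vs y -> @lsa_br k K (mkK x) (mkK y) = mkK (br x y).
Proof. exact: mkBr. Qed.

Lemma pibar_hom : is_hom pibar.
Proof.
split.
  move=> a; elim/KInd => x vx; elim/KInd => y vy.
  have vax : Vs (a *: x) := VZ SQh a vx.
  rewrite (mkZ' SQh a vx) (mkD' SQh vax vy) (pibar_mk (Vs_lc a vx vy)) (pibar_mk vx) (pibar_mk vy).
  exact: hpl.
split.
  by move=> b q [y [vy [py ->]]]; rewrite pibar_mk //; have [_ [hp _]] := hpi; apply: hp.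
elim/KInd => x vx; elim/KInd => y vy; rewrite mkBrK // !pibar_mk //; last exact: (hVbr SQh).
by have [_ [_ hb]] := hpi; apply: hb.
Qed.

Lemma derivedK x : derived x -> @derived k K (mkK x).
Proof.
move=> dx; suff [] : derived x /\ @derived k K (mkK x) by [].
move: x dx; apply: span_ind; first by split; apply: span0.
move=> a x y [p [q [_ [_ ->]]]] [dy' dy].
split; first by apply: span_lc => //; apply: span_gen; exists p, q.
have vpq : Vs (br p q) by apply: derivedV; apply: span_gen; exists p, q.
have vy : Vs y := derivedV dy'.
rewrite -mkD' //; last exact: (VZ SQh).
rewrite -mkZ' //; apply: span_lc => //.
have [vp [Vvp pvp]] := piV (pi p); have [vq [Vvq pvq]] := piV (pi q).
apply: span_gen; exists (mkK vp), (mkK vq); split => //; split => //.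
rewrite mkBrK //; apply: mk_eqW => //; first exact: (hVbr SQh).
have -> : br p q - br vp vq = br (p - vp) q + br vp (q - vq).
  by rewrite brBl brBr addrA subrK.
apply: (WD SQh); [apply: RF_Ws | apply: FR_Ws]; by rewrite /Rk (linB hpl) ?pvp ?pvq subrr.
Qed.

Lemma pibar_inC : inC pibar.
Proof.
split; first exact: pibar_hom.
split; first by move=> l; have [x [vx <-]] := piV l; exists (mkK x); rewrite pibar_mk.
elim/KInd => x vx; rewrite pibar_mk // => px; split; first exact: derivedK (V_R vx px).
elim/KInd => y vy; rewrite mkBrK //; rewrite mk0'; apply: mk_eqW => //.
- exact: (hVbr SQh).
- exact: (hV0 SQh).
by rewrite subr0; apply: RF_Ws.
Qed.

Lemma image_derived (T : lieSuperAlg k) (sigma : T -> L) (tau : T -> K) :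
  is_hom tau -> (forall t, pibar (tau t) = sigma t) -> (forall l, exists t, sigma t = l) ->
  forall z, derived z -> exists t, tau t = z.
Proof.
move=> ht hts ssurj; have [tl [_ tb]] := ht.
apply: span_ind; first by exists 0; apply: (lin0 tl).
move=> a x y [q1 [q2 [_ [_ ->]]]] [ty <-].
have [t1 e1] := ssurj (pibar q1); have [t2 e2] := ssurj (pibar q2).
have hC := pibar_inC.
have [n1 [eq1 nn1]] : exists n, q1 = tau t1 + n /\ pibar n = 0.
  exists (q1 - tau t1); split; first by rewrite addrC subrK.
  by rewrite (linB (hom_lin pibar_hom)) hts e1 subrr.
have [n2 [eq2 nn2]] : exists n, q2 = tau t2 + n /\ pibar n = 0.
  exists (q2 - tau t2); split; first by rewrite addrC subrK.
  by rewrite (linB (hom_lin pibar_hom)) hts e2 subrr.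
exists (a *: lsa_br t1 t2 + ty).
rewrite tl tb eq1 eq2 !brDl !brDr.
rewrite (ker_central hC (tau t1) nn2).2 (ker_central hC (tau t2) nn1).1 (ker_central hC n2 nn1).1.
by rewrite !addr0.
Qed.

Lemma mk_sum m (c : 'I_m -> k) (v : 'I_m -> F) : (forall i, Vs (v i)) ->
  mkK (\sum_i c i *: v i) = \sum_i c i *: mkK (v i).
Proof.
move=> hv.
suff [] : Vs (\sum_i c i *: v i) /\ mkK (\sum_i c i *: v i) = \sum_i c i *: mkK (v i) by [].
apply: (big_rec2 (fun x y => Vs x /\ mkK x = y)); first by split; [exact: (hV0 SQh) | ].
move=> i x y _ [vx <-]; split; first exact: Vs_lc.
by rewrite mkZ' // mkD' //; apply: (VZ SQh).
Qed.

Lemma part1_core (T : lieSuperAlg k) (sigma : T -> L) : universal sigma ->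
  qdim_le (fun x => Rk x /\ derived x) Ws (fun t : T => sigma t = 0) (fun t : T => t = 0).
Proof.
move=> [hsC huniv] m [d [hd hind]].
have [tau [ht hts]] := huniv K pibar pibar_inC.
have ssurj := hsC.2.1.
have ex i : exists t, sigma t = 0 /\ tau t = mkK (d i).
  have [t et] := image_derived ht hts ssurj (derivedK (hd i).2).
  exists t; split => //; rewrite -hts et pibar_mk; first exact: (hd i).1.
  by apply: derivedV; exact: (hd i).2.
have [tt htt] := choice _ ex.
exists tt; split; first by move=> i; exact: (htt i).1.
move=> c hc i; apply: hind.
have vd : forall i, Vs (d i) by move=> j; apply: derivedV; exact: (hd j).2.
have vs : Vs (\sum_i c i *: d i).
  by apply: (big_ind Vs); [exact: (hV0 SQh) | exact: (VD SQh) | move=> j _; apply: (VZ SQh)].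
rewrite -[X in Ws X]subr0; apply: (mk_inv (H := SQh) vs (hV0 SQh)).
rewrite mk_sum // -mk0'.
under eq_bigr do rewrite -(htt _).2.
by rewrite -(lin_sum (hom_lin ht)) hc (lin0 (hom_lin ht)).
Qed.

End Core.


Lemma min_set (I : finType) (P : {set I} -> Prop) J : P J ->
  exists J0, P J0 /\ forall j, j \in J0 -> ~ P (J0 :\ j).
Proof.
suff H : forall n (J : {set I}), (#|J| <= n)%N -> P J -> exists J0, P J0 /\ forall j, j \in J0 -> ~ P (J0 :\ j).
  by move=> pJ; exact: H _ J (leqnn _) pJ.
elim=> [|n IH] J0 hJ pJ.
  by exists J0; split => // j jJ; move: hJ; rewrite (cardsD1 j) jJ.
case: (classic (exists j, j \in J0 /\ P (J0 :\ j))) => [[j [jJ pj]]|nex].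
  by apply: (IH (J0 :\ j)) => //; move: hJ; rewrite (cardsD1 j) jJ add1n ltnS.
by exists J0; split => // j jJ pj; apply: nex; exists j.
Qed.

Unset Implicit Arguments.

Theorem lemma4p3 (k : fieldType) (hchar : (2%:R : k) != 0 /\ (3%:R : k) != 0)
  (L : lieSuperAlg k) (hL : finite_dim L)
  (X : Type) (par : X -> bool) (F : lieSuperAlg k) (iota : X -> F)
  (hfree : is_free_on par iota)
  (pi : F -> L) (hpi : is_hom pi) (hsurj : forall y, exists x, pi x = y) :
  let R := fun x : F => pi x = 0 in
  let Dnum := fun x : F => R x /\ @derived k F x in
  let Dden := @brsp k F (fun _ : F => True) R in
  (forall (T : lieSuperAlg k) (sigma : T -> L), universal sigma ->
     qdim_le Dnum Dden (fun t : T => sigma t = 0) (fun t : T => t = 0)) /\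
  (forall (Kk : lieSuperAlg k) (psi : Kk -> L), inC psi ->
     quot_hom_image Dnum Dden (fun z : Kk => psi z = 0)).
Proof.
move=> R Dnum Dden; split; last first.
  by move=> Kk psi hC; exact: (part2 hfree hpi hsurj hC).
move=> T sigma hu.
have [n [v hv]] := hL.
have [cc' hcc'] : exists cc' : 'I_n -> L * L, forall i,
    lsa_part false (cc' i).1 /\ lsa_part true (cc' i).2 /\ v i = (cc' i).1 + (cc' i).2.
  have H i : exists p : L * L, lsa_part false p.1 /\ lsa_part true p.2 /\ v i = p.1 + p.2.
    by have [a [b ?]] := lsa_decomp (v i); exists (a, b).
  exact: choice _ H.
pose u (j : 'I_n * bool) : L := if j.2 then (cc' j.1).2 else (cc' j.1).1.
have hu_p j : lsa_part j.2 (u j).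
  by rewrite /u; case: j.2; have [? [? _]] := hcc' j.1.
have [g hg] : exists g : 'I_n * bool -> F, forall j, lsa_part j.2 (g j) /\ pi (g j) = u j.
  apply: (choice (fun j y => lsa_part j.2 y /\ pi y = u j)) => j.
  apply: homog_lift => //; exact: hu_p.
have hPT : PJ u [set: 'I_n * bool].
  move=> l; have [c ->] := hv l.
  exists (fun j => c j.1), 0; split; first exact: span0.
  rewrite addr0 [RHS](eq_bigl (fun _ => true)); last by move=> j; rewrite in_setT.
  rewrite -(pair_bigA _ (fun i b => c i *: u (i, b))) /=.
  apply: eq_bigr => i _; rewrite big_bool /u /= -scalerDr addrC.
  by have [_ [_ ->]] := hcc' i.
have [J [hJ hJmin]] := min_set hPT.
exact: (part1_core hpi hsurj (fun j => (hg j).2) (fun j => (hg j).1) hJ hJmin hu).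
Qed.
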